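(* The variety $\mathsf{V}(S_{(4,475)})$ is the ai-semiring variety defined by the identity $xy\approx x^2$.
   Context: An ai-semiring is an algebra $(S,+,\cdot)$ with $(S,+)$ a semilattice, $(S,\cdot)$ a semigroup, and both distributive laws. $\mathsf{V}(S)$ is the variety generated by $S$; ''the ai-semiring variety defined by identities $\Sigma$'' is the class of all ai-semirings satisfying $\Sigma$. $S_{(4,475)}$ has carrier $\{1,2,3,4\}$; addition: $x+x=x$, $2+x=x$, $1+x=1$ for all $x$, $3+4=1$; multiplication (row $a$, column $b$ gives $a\cdot b$): row $1$: $3,3,3,3$; row $2$: $2,2,2,2$; row $3$: $3,3,3,3$; row $4$: $3,3,3,3$. *)

(* Defs.v *)
Definition ai_semiring (T : Type) (add mul : T -> T -> T) : Prop :=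
  (forall x y z, add (add x y) z = add x (add y z)) /\
  (forall x y, add x y = add y x) /\
  (forall x, add x x = x) /\
  (forall x y z, mul (mul x y) z = mul x (mul y z)) /\
  (forall x y z, mul x (add y z) = add (mul x y) (mul x z)) /\
  (forall x y z, mul (add x y) z = add (mul x z) (mul y z)).

Inductive S4 : Type := s1 | s2 | s3 | s4.

Definition S4_eqb (a b : S4) : bool :=
  match a, b with
  | s1, s1 | s2, s2 | s3, s3 | s4, s4 => true
  | _, _ => false
  end.

(* x+x=x, 2+x=x+2=x, 1+x=x+1=1, 3+4=4+3=1 *)
Definition S4_add (a b : S4) : S4 :=
  if S4_eqb a b then a else
  match a, b with
  | s2, _ => b
  | _, s2 => a
  | _, _ => s1
  end.

Definition S4_mul (a b : S4) : S4 :=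
  match a with
  | s2 => s2
  | _ => s3
  end.

(** Membership of an algebra (T,add,mul) of type (2,2) in
    V(S_(4,475)) = HSP(S_(4,475)): T is a homomorphic image of a
    subalgebra B of a direct power S^I (I an arbitrary index type). *)
Definition in_V_S4 (T : Type) (add mul : T -> T -> T) : Prop :=
  exists (I : Type) (B : (I -> S4) -> Prop),
    (forall x y, B x -> B y -> B (fun i => S4_add (x i) (y i))) /\
    (forall x y, B x -> B y -> B (fun i => S4_mul (x i) (y i))) /\
    exists h : {x : I -> S4 | B x} -> T,
      (forall t : T, exists x, h x = t) /\
      (forall x y z : {x : I -> S4 | B x},
          proj1_sig z = (fun i => S4_add (proj1_sig x i) (proj1_sig y i)) ->
          h z = add (h x) (h y)) /\
      (forall x y z : {x : I -> S4 | B x},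
          proj1_sig z = (fun i => S4_mul (proj1_sig x i) (proj1_sig y i)) ->
          h z = mul (h x) (h y)).

(* Main.v *)
Require Import Defs.
From Stdlib Require Import FunctionalExtensionality ClassicalEpsilon.

Lemma S4_add_assoc : forall x y z, S4_add (S4_add x y) z = S4_add x (S4_add y z).
Proof. destruct x, y, z; reflexivity. Qed.
Lemma S4_add_comm : forall x y, S4_add x y = S4_add y x.
Proof. destruct x, y; reflexivity. Qed.
Lemma S4_add_idem : forall x, S4_add x x = x.
Proof. destruct x; reflexivity. Qed.
Lemma S4_mul_assoc : forall x y z, S4_mul (S4_mul x y) z = S4_mul x (S4_mul y z).
Proof. destruct x, y, z; reflexivity. Qed.
Lemma S4_dl : forall x y z, S4_mul x (S4_add y z) = S4_add (S4_mul x y) (S4_mul x z).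
Proof. destruct x, y, z; reflexivity. Qed.
Lemma S4_dr : forall x y z, S4_mul (S4_add x y) z = S4_add (S4_mul x z) (S4_mul y z).
Proof. destruct x, y, z; reflexivity. Qed.
Lemma S4_sq : forall x y, S4_mul x y = S4_mul x x.
Proof. destruct x, y; reflexivity. Qed.

Lemma forward : forall (T : Type) (add mul : T -> T -> T),
    in_V_S4 T add mul ->
    (ai_semiring T add mul /\ forall x y : T, mul x y = mul x x).
Proof.
  intros T add mul [I [B [Hadd [Hmul [h [Hsurj [Hha Hhm]]]]]]].
  set (P := fun x y : {x : I -> S4 | B x} =>
        exist B (fun i => S4_add (proj1_sig x i) (proj1_sig y i))
          (Hadd _ _ (proj2_sig x) (proj2_sig y))).
  set (M := fun x y : {x : I -> S4 | B x} =>
        exist B (fun i => S4_mul (proj1_sig x i) (proj1_sig y i))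
          (Hmul _ _ (proj2_sig x) (proj2_sig y))).
  assert (HP : forall x y, h (P x y) = add (h x) (h y)) by (intros; apply Hha; reflexivity).
  assert (HM : forall x y, h (M x y) = mul (h x) (h y)) by (intros; apply Hhm; reflexivity).
  assert (Hext : forall z z', proj1_sig z = proj1_sig z' -> h z = h z').
  { intros z z' E. transitivity (add (h z') (h z')).
    - apply Hha. apply functional_extensionality; intro i; rewrite E; symmetry; apply S4_add_idem.
    - symmetry. apply Hha. apply functional_extensionality; intro i; symmetry; apply S4_add_idem. }
  repeat split.
  - intros a b c. destruct (Hsurj a) as [x <-]; destruct (Hsurj b) as [y <-];
    destruct (Hsurj c) as [z <-].
    rewrite <- !HP. apply Hext. apply functional_extensionality; intro i; simpl.
    apply S4_add_assoc.
  - intros a b. destruct (Hsurj a) as [x <-]; destruct (Hsurj b) as [y <-].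
    rewrite <- !HP. apply Hext. apply functional_extensionality; intro i; simpl.
    apply S4_add_comm.
  - intros a. destruct (Hsurj a) as [x <-].
    rewrite <- HP. apply Hext. apply functional_extensionality; intro i; simpl.
    apply S4_add_idem.
  - intros a b c. destruct (Hsurj a) as [x <-]; destruct (Hsurj b) as [y <-];
    destruct (Hsurj c) as [z <-].
    rewrite <- !HM. apply Hext. apply functional_extensionality; intro i; simpl.
    apply S4_mul_assoc.
  - intros a b c. destruct (Hsurj a) as [x <-]; destruct (Hsurj b) as [y <-];
    destruct (Hsurj c) as [z <-].
    rewrite <- HP, <- !HM, <- HP. apply Hext. apply functional_extensionality; intro i; simpl.
    apply S4_dl.
  - intros a b c. destruct (Hsurj a) as [x <-]; destruct (Hsurj b) as [y <-];
    destruct (Hsurj c) as [z <-].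
    rewrite <- HP, <- !HM, <- HP. apply Hext. apply functional_extensionality; intro i; simpl.
    apply S4_dr.
  - intros a b. destruct (Hsurj a) as [x <-]; destruct (Hsurj b) as [y <-].
    rewrite <- !HM. apply Hext. apply functional_extensionality; intro i; simpl.
    apply S4_sq.
Qed.

Definition Gf {T} (add : T -> T -> T) (i : option T) (x : T) : S4 :=
  match i with
  | None => s4
  | Some b => if excluded_middle_informative (add x b = b) then s2 else s4
  end.
Definition ov {T} (g : T -> S4) (o : option T) : S4 :=
  match o with None => s2 | Some a => g a end.
Definition E {T} (add : T -> T -> T) (oa oc : option T) : option T -> S4 :=
  fun i => S4_add (ov (Gf add i) oa) (S4_mul (ov (Gf add i) oc) (ov (Gf add i) oc)).
Definition oj {T} (add : T -> T -> T) (o1 o2 : option T) : option T :=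
  match o1, o2 with
  | Some a, Some b => Some (add a b)
  | Some a, None => Some a
  | None, o => o
  end.
Definition tv {T} (add mul : T -> T -> T) (d : T) (oa oc : option T) : T :=
  match oa, oc with
  | Some a, Some c => add a (mul c c)
  | Some a, None => a
  | None, Some c => mul c c
  | None, None => d
  end.
Definition Bp {T} (add : T -> T -> T) (x : option T -> S4) : Prop :=
  exists t : T * option T * option T,
    ~ (snd (fst t) = None /\ snd t = None) /\ x = E add (snd (fst t)) (snd t).

Lemma key_inj : forall u v u' v', (u = s2 \/ u = s4) -> (v = s2 \/ v = s4) ->
  (u' = s2 \/ u' = s4) -> (v' = s2 \/ v' = s4) ->
  S4_add u (S4_mul v v) = S4_add u' (S4_mul v' v') -> u = u' /\ v = v'.
Proof.
  intros u v u' v' [->| ->] [->| ->] [->| ->] [->| ->]; simpl; intro H;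
    try discriminate; split; reflexivity.
Qed.

Lemma ov_24 : forall T (add : T -> T -> T) i o,
  ov (Gf add i) o = s2 \/ ov (Gf add i) o = s4.
Proof.
  intros T add [b|] [a|]; simpl; auto.
  destruct (excluded_middle_informative (add a b = b)); auto.
Qed.

Lemma opt_det : forall T (add : T -> T -> T),
  (forall x y, add x y = add y x) -> (forall x, add x x = x) ->
  forall o o', (forall i, ov (Gf add i) o = ov (Gf add i) o') -> o = o'.
Proof.
  intros T add Hc Hi [a|] [a'|] H.
  - pose proof (H (Some a')) as H1. pose proof (H (Some a)) as H2. simpl in H1, H2.
    assert (E1 : add a' a' = a') by apply Hi.
    assert (E2 : add a a = a) by apply Hi.
    destruct (excluded_middle_informative (add a a' = a')) as [F1|F1];
    destruct (excluded_middle_informative (add a' a' = a')) as [F2|F2];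
    try contradiction; try discriminate.
    destruct (excluded_middle_informative (add a' a = a)) as [F3|F3];
    destruct (excluded_middle_informative (add a a = a)) as [F4|F4];
    try contradiction; try discriminate.
    f_equal. rewrite <- F1, <- F3 at 1. apply Hc.
  - pose proof (H None) as H1; simpl in H1; discriminate.
  - pose proof (H None) as H1; simpl in H1; discriminate.
  - reflexivity.
Qed.

Lemma E_inj : forall T (add : T -> T -> T),
  (forall x y, add x y = add y x) -> (forall x, add x x = x) ->
  forall oa oc oa' oc', E add oa oc = E add oa' oc' -> oa = oa' /\ oc = oc'.
Proof.
  intros T add Hc Hi oa oc oa' oc' H.
  assert (K : forall i, ov (Gf add i) oa = ov (Gf add i) oa' /\
                        ov (Gf add i) oc = ov (Gf add i) oc').
  { intro i. apply key_inj; try apply ov_24. exact (equal_f H i). }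
  split; apply (opt_det T add Hc Hi); intro i; apply K.
Qed.

Lemma Gf_hom : forall T (add : T -> T -> T),
  (forall x y z, add (add x y) z = add x (add y z)) ->
  (forall x y, add x y = add y x) -> (forall x, add x x = x) ->
  forall i x y, Gf add i (add x y) = S4_add (Gf add i x) (Gf add i y).
Proof.
  intros T add Ha Hc Hi [b|] x y; simpl; [|reflexivity].
  assert (L1 : add (add x y) b = b -> add x b = b).
  { intro H. rewrite <- H at 1. rewrite <- (Ha x (add x y) b), <- (Ha x x y), Hi. exact H. }
  assert (L2 : add (add x y) b = b -> add y b = b).
  { intro H. rewrite <- H at 1. rewrite <- (Ha y (add x y) b), (Hc x y), <- (Ha y y x), Hi,
    (Hc y x). exact H. }
  assert (L3 : add x b = b -> add y b = b -> add (add x y) b = b).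
  { intros H1 H2. rewrite Ha, H2. exact H1. }
  destruct (excluded_middle_informative (add (add x y) b = b)) as [F|F];
  destruct (excluded_middle_informative (add x b = b)) as [F1|F1];
  destruct (excluded_middle_informative (add y b = b)) as [F2|F2];
  try reflexivity; exfalso; eauto.
Qed.

Lemma ov_hom : forall T (add : T -> T -> T) (g : T -> S4),
  (forall x y, g (add x y) = S4_add (g x) (g y)) ->
  forall o1 o2, ov g (oj add o1 o2) = S4_add (ov g o1) (ov g o2).
Proof.
  intros T add g Hg [a|] [b|]; simpl; auto;
  try (destruct (g a); reflexivity); try (destruct (g b); reflexivity).
Qed.

Lemma S4_id1 : forall u v u' v',
  S4_add (S4_add u (S4_mul v v)) (S4_add u' (S4_mul v' v')) =
  S4_add (S4_add u u') (S4_mul (S4_add v v') (S4_add v v')).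
Proof. destruct u, v, u', v'; reflexivity. Qed.

Lemma S4_id2 : forall u v w,
  S4_mul (S4_add u (S4_mul v v)) w =
  S4_add s2 (S4_mul (S4_add u v) (S4_add u v)).
Proof. destruct u, v, w; reflexivity. Qed.

Lemma E_add : forall T (add : T -> T -> T),
  (forall x y z, add (add x y) z = add x (add y z)) ->
  (forall x y, add x y = add y x) -> (forall x, add x x = x) ->
  forall oa oc ob od,
  (fun i => S4_add (E add oa oc i) (E add ob od i)) = E add (oj add oa ob) (oj add oc od).
Proof.
  intros T add Ha Hc Hi oa oc ob od. apply functional_extensionality; intro i.
  unfold E. rewrite !(ov_hom T add (Gf add i) (Gf_hom T add Ha Hc Hi i)).
  apply S4_id1.
Qed.

Lemma E_mul : forall T (add : T -> T -> T),
  (forall x y z, add (add x y) z = add x (add y z)) ->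
  (forall x y, add x y = add y x) -> (forall x, add x x = x) ->
  forall oa oc ob od,
  (fun i => S4_mul (E add oa oc i) (E add ob od i)) = E add None (oj add oa oc).
Proof.
  intros T add Ha Hc Hi oa oc ob od. apply functional_extensionality; intro i.
  unfold E. rewrite !(ov_hom T add (Gf add i) (Gf_hom T add Ha Hc Hi i)).
  apply S4_id2.
Qed.

Lemma tv_add : forall T (add mul : T -> T -> T),
  ai_semiring T add mul -> (forall x y : T, mul x y = mul x x) ->
  forall d d1 d2 oa oc ob od,
  ~ (oa = None /\ oc = None) -> ~ (ob = None /\ od = None) ->
  tv add mul d (oj add oa ob) (oj add oc od) =
  add (tv add mul d1 oa oc) (tv add mul d2 ob od).
Proof.
  intros T add mul [Ha [Hc [Hi [Hm [Hdl Hdr]]]]] Hsq d d1 d2 oa oc ob od N1 N2.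
  assert (Pa : forall c e, mul (add c e) (add c e) = add (mul c c) (mul e e)).
  { intros c e. rewrite Hdr, (Hsq c (add c e)), (Hsq e (add c e)). reflexivity. }
  assert (Sw : forall a b c e, add (add a b) (add c e) = add (add a c) (add b e)).
  { intros a b c e. rewrite !Ha. f_equal. rewrite <- !Ha. f_equal. apply Hc. }
  destruct oa as [a|], oc as [c|], ob as [b|], od as [e|]; simpl;
    try (exfalso; apply N1; split; reflexivity);
    try (exfalso; apply N2; split; reflexivity).
  - rewrite Pa. apply Sw.
  - rewrite !Ha. f_equal. apply Hc.
  - rewrite Pa. rewrite Ha. reflexivity.
  - rewrite Ha. reflexivity.
  - reflexivity.
  - reflexivity.
  - rewrite Pa, <- !Ha, (Hc b (mul c c)). reflexivity.
  - apply Hc.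
  - apply Pa.
Qed.

Lemma tv_mul : forall T (add mul : T -> T -> T),
  ai_semiring T add mul -> (forall x y : T, mul x y = mul x x) ->
  forall d d1 oa oc,
  ~ (oa = None /\ oc = None) ->
  tv add mul d None (oj add oa oc) =
  mul (tv add mul d1 oa oc) (tv add mul d1 oa oc).
Proof.
  intros T add mul [Ha [Hc [Hi [Hm [Hdl Hdr]]]]] Hsq d d1 oa oc N1.
  assert (Pa : forall c e, mul (add c e) (add c e) = add (mul c c) (mul e e)).
  { intros c e. rewrite Hdr, (Hsq c (add c e)), (Hsq e (add c e)). reflexivity. }
  assert (Pi : forall c, mul (mul c c) (mul c c) = mul c c).
  { intros c. rewrite Hm. apply Hsq. }
  destruct oa as [a|], oc as [c|]; simpl;
    try (exfalso; apply N1; split; reflexivity).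
  - rewrite !Pa, Pi. reflexivity.
  - reflexivity.
  - symmetry; apply Pi.
Qed.

Definition hfun {T} (add mul : T -> T -> T) (x : {x : option T -> S4 | Bp add x}) : T :=
  let t := proj1_sig (constructive_indefinite_description _ (proj2_sig x)) in
  tv add mul (fst (fst t)) (snd (fst t)) (snd t).

Lemma hv : forall T (add mul : T -> T -> T),
  (forall x y, add x y = add y x) -> (forall x, add x x = x) ->
  forall x d oa oc, ~ (oa = None /\ oc = None) -> proj1_sig x = E add oa oc ->
  hfun add mul x = tv add mul d oa oc.
Proof.
  intros T add mul Hc Hi x d oa oc N Hx. unfold hfun; cbv zeta.
  destruct (constructive_indefinite_description _ (proj2_sig x)) as [[[d' oa'] oc'] [N' E']].
  simpl in *. rewrite Hx in E'. destruct (E_inj T add Hc Hi _ _ _ _ E') as [Ea Ec]. subst.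
  repeat match goal with o : option T |- _ => destruct o end; simpl; try reflexivity.
  exfalso; apply N; split; reflexivity.
Qed.

Lemma backward : forall (T : Type) (add mul : T -> T -> T),
    (ai_semiring T add mul /\ forall x y : T, mul x y = mul x x) ->
    in_V_S4 T add mul.
Proof.
  intros T add mul [HS Hsq].
  pose proof HS as [Ha [Hc [Hi [Hm [Hdl Hdr]]]]].
  assert (NJ : forall o1 o2, ~ (o1 = None /\ o2 = None) -> oj add o1 o2 <> None).
  { intros [a|] [b|] N; simpl; try discriminate. intros _; apply N; split; reflexivity. }
  assert (NJ2 : forall o1 o2 o3 o4, ~ (o1 = None /\ o2 = None) ->
            ~ (oj add o1 o3 = None /\ oj add o2 o4 = None)).
  { intros [a|] [b|] [c|] [e|] N [E1 E2]; simpl in *; try discriminate;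
    apply N; split; reflexivity. }
  exists (option T), (Bp add). split; [|split].
  - intros x y [[[d oa] oc] [N1 Hx]] [[[d' ob] od] [N2 Hy]]; simpl in *.
    exists (d, oj add oa ob, oj add oc od); simpl. split.
    + apply NJ2; exact N1.
    + subst. apply E_add; assumption.
  - intros x y [[[d oa] oc] [N1 Hx]] [[[d' ob] od] [N2 Hy]]; simpl in *.
    exists (d, None, oj add oa oc); simpl. split.
    + intros [_ H]. exact (NJ _ _ N1 H).
    + subst. apply E_mul; assumption.
  - exists (hfun add mul). split; [|split].
    + intro t.
      assert (Bt : Bp add (E add (Some t) None)).
      { exists (t, Some t, None); simpl. split; [intros [H _]; discriminate | reflexivity]. }
      exists (exist _ _ Bt).
      rewrite (hv T add mul Hc Hi _ t (Some t) None); [reflexivity| |reflexivity].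
      intros [H _]; discriminate.
    + intros x y z Hz.
      destruct (proj2_sig x) as [[[d oa] oc] [N1 Hx]].
      destruct (proj2_sig y) as [[[d' ob] od] [N2 Hy]]. simpl in *.
      rewrite (hv T add mul Hc Hi x d oa oc N1 Hx).
      rewrite (hv T add mul Hc Hi y d' ob od N2 Hy).
      rewrite (hv T add mul Hc Hi z d (oj add oa ob) (oj add oc od)).
      * apply tv_add; assumption.
      * apply NJ2; exact N1.
      * rewrite Hz, Hx, Hy. apply E_add; assumption.
    + intros x y z Hz.
      destruct (proj2_sig x) as [[[d oa] oc] [N1 Hx]].
      destruct (proj2_sig y) as [[[d' ob] od] [N2 Hy]]. simpl in *.
      rewrite (hv T add mul Hc Hi x d oa oc N1 Hx).
      rewrite (hv T add mul Hc Hi y d' ob od N2 Hy).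
      rewrite (hv T add mul Hc Hi z d None (oj add oa oc)).
      * rewrite (Hsq (tv add mul d oa oc)). apply tv_mul; assumption.
      * intros [_ H]. exact (NJ _ _ N1 H).
      * rewrite Hz, Hx, Hy. apply (E_mul T add Ha Hc Hi oa oc ob od).
Qed.

Theorem proposition4p5 :
  forall (T : Type) (add mul : T -> T -> T),
    in_V_S4 T add mul <->
    (ai_semiring T add mul /\ forall x y : T, mul x y = mul x x).
Proof.
  intros T add mul; split; [apply forward | apply backward].
Qed.
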